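(* Let $m>0$, $\alpha>0$ and $\omega\ge 0$ with $\alpha>2\omega$, and consider the dynamical system \[ \frac{d\phi}{dt}=\gamma,\qquad \frac{d\gamma}{dt}=\frac{1}{m}\bigl(-\gamma+\omega-k\sin\phi\bigr),\qquad \frac{dk}{dt}=\alpha\cos\phi-k, \] with $(\phi,\gamma,k)\in[-\pi,\pi)\times\mathbb{R}\times\mathbb{R}$ ($\phi$ taken modulo $2\pi$). Write $\theta:=\tfrac12\arcsin\!\bigl(\tfrac{2\omega}{\alpha}\bigr)$ and consider its four equilibrium points $P_1=(\theta,0,\alpha\cos\theta)$, $P_2=(\tfrac{\pi}{2}-\theta,0,\alpha\sin\theta)$, $P_3=(-\pi+\theta,0,-\alpha\cos\theta)$, $P_4=(-\tfrac{\pi}{2}-\theta,0,-\alpha\sin\theta)$. Let $u:=\alpha+\sqrt{\alpha^2-4\omega^2}$ and $v:=\alpha-\sqrt{\alpha^2-4\omega^2}$. Then: \begin{enumerate} \item Let $\Gamma_1$ be the region in the $(u,v)$ plane with $0\le v\le u\le \frac{2(m^2-m+1)}{3m}$ that is bounded by the curves \[ v=u-\frac{\bigl(m+1+\sqrt{4(m+1)^2-6m(u+2)}\bigr)\bigl(\sqrt{4(m+1)^2-6m(u+2)}-2(m+1)\bigr)^2}{54m^2}, \] \[ v=u-\frac{\bigl(m+1-\sqrt{4(m+1)^2-6m(u+2)}\bigr)\bigl(\sqrt{4(m+1)^2-6m(u+2)}+2(m+1)\bigr)^2}{54m^2}. \] If $(u,v)\notin\Gamma_1$, then the Jacobian matrix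 of the system at the equilibria $P_1$ and $P_3$ has a negative real eigenvalue and two complex-conjugate eigenvalues with negative real part. Otherwise, the Jacobian matrix at $P_1$ and $P_3$ has three negative real eigenvalues. \item Let $\Gamma_2$ be the region in the $(u,v)$ plane with $0\le v\le u$ and $v\le \frac{2(m^2-m+1)}{3m}$ that is bounded by the curves \[ u=v-\frac{\bigl(m+1+\sqrt{4(m+1)^2-6m(v+2)}\bigr)\bigl(\sqrt{4(m+1)^2-6m(v+2)}-2(m+1)\bigr)^2}{54m^2}, \] \[ u=v-\frac{\bigl(m+1-\sqrt{4(m+1)^2-6m(v+2)}\bigr)\bigl(\sqrt{4(m+1)^2-6m(v+2)}+2(m+1)\bigr)^2}{54m^2}. \] If $(u,v)\notin\Gamma_2$, then the Jacobian matrix at the equilibria $P_2$ and $P_4$ has a positive real eigenvalue and two complex-conjugate eigenvalues with negative real part. Otherwise, the Jacobian matrix at $P_2$ and $P_4$ has one positive real eigenvalue and two negative real eigenvalues. \end{enumerate}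
   Context: This system describes the phase difference $\phi$, its derivative $\gamma$, and the (rescaled) adaptive coupling strength $k$ of two identical-mass Kuramoto oscillators with inertia and Hebbian learning; $m>0$ is the (rescaled) mass, $\alpha>0$ the learning enhancement factor, and $\omega\ge 0$ the intrinsic-frequency difference (the paper assumes $\omega\ge0$ throughout). The Jacobian matrix at an equilibrium $(\phi^*,\gamma^*,k^* )$ is the Jacobian of the vector field $(\gamma,\ \frac1m(-\gamma+\omega-k\sin\phi),\ \alpha\cos\phi-k)$ with respect to $(\phi,\gamma,k)$, evaluated at that point. *)

(* Defs.v *)
From HB Require Import structures.
From mathcomp Require Import all_boot all_order all_algebra.
From mathcomp Require Import reals trigo.
From mathcomp Require Import complex.
Set Implicit Arguments. Unset Strict Implicit. Unset Printing Implicit Defensive.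
Import Order.TTheory GRing.Theory Num.Theory.
Local Open Scope ring_scope.

(* Jacobian matrix of the vector field
   (phi, gamma, k) |-> (gamma, (-gamma + omega - k sin phi)/m, alpha cos phi - k)
   w.r.t. (phi, gamma, k) at (phi, gamma, k):
   row i = gradient of component i, column j = derivative w.r.t. variable j. *)
Definition jac (R : realType) (m alpha omega phi gamma k : R) : 'M[R]_3 :=
  \matrix_(i < 3, j < 3)
    nth 0 (nth [::]
      [:: [:: 0; 1; 0];
          [:: - (m^-1 * (k * cos phi)); - m^-1; - (m^-1 * sin phi)];
          [:: - (alpha * sin phi); 0; -1]] i) j.

(* Eigenvalues (with multiplicity) = roots of the characteristic polynomial
   of the matrix viewed over the complex numbers R[i]. *)
Definition cmx (R : realType) (A : 'M[R]_3) : 'M[R[i]]_3 :=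
  map_mx (real_complex R) A.

Definition real_and_cpair_negre (R : realType) (P : R -> Prop) (A : 'M[R]_3) :=
  exists (r : R) (z : R[i]),
    P r /\ Im z != 0 /\ Re z < 0 /\
    char_poly (cmx A) =
      ('X - (real_complex R r)%:P) * ('X - z%:P) * ('X - (conjc z)%:P).

Definition three_real_eigs (R : realType) (Pa Pb Pc : R -> Prop) (A : 'M[R]_3) :=
  exists a b c : R, Pa a /\ Pb b /\ Pc c /\
    char_poly (cmx A) =
      ('X - (real_complex R a)%:P) * ('X - (real_complex R b)%:P)
        * ('X - (real_complex R c)%:P).

Definition negR (R : realType) (x : R) : Prop := x < 0.
Definition posR (R : realType) (x : R) : Prop := 0 < x.

(* The two boundary curves: for the parameter x (= u in part 1, = v in part 2),
   y = x - (m+1 +/- S)(S -/+ 2(m+1))^2/(54 m^2), S = sqrt(4(m+1)^2 - 6m(x+2)). *)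
Definition Sroot (R : realType) (m x : R) : R :=
  Num.sqrt (4 * (m + 1) ^+ 2 - 6 * m * (x + 2)).

Definition curve1 (R : realType) (m x : R) : R :=
  x - (m + 1 + Sroot m x) * (Sroot m x - 2 * (m + 1)) ^+ 2 / (54 * m ^+ 2).

Definition curve2 (R : realType) (m x : R) : R :=
  x - (m + 1 - Sroot m x) * (Sroot m x + 2 * (m + 1)) ^+ 2 / (54 * m ^+ 2).

Definition ubound (R : realType) (m : R) : R := 2 * (m ^+ 2 - m + 1) / (3 * m).

Definition between_curves (R : realType) (m x y : R) : Prop :=
  (curve1 m x <= y <= curve2 m x) \/ (curve2 m x <= y <= curve1 m x).

Definition Gamma1 (R : realType) (m u v : R) : Prop :=
  0 <= v /\ v <= u /\ u <= ubound m /\ between_curves m u v.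

Definition Gamma2 (R : realType) (m u v : R) : Prop :=
  0 <= v /\ v <= u /\ v <= ubound m /\ between_curves m v u.

(* Main.v *)
Require Import Defs.
From HB Require Import structures.
From mathcomp Require Import all_boot all_order all_algebra.
From mathcomp Require Import reals trigo.
From mathcomp Require Import complex.
From mathcomp Require Import ring lra.
Import Order.TTheory GRing.Theory Num.Theory.
Local Open Scope ring_scope.

Lemma charJ (R : realType) (m alpha omega phi k : R) :
  char_poly (jac m alpha omega phi 0 k) =
  'X^3 + (1 + m^-1)%:P * 'X^2 + (m^-1 + m^-1 * (k * cos phi))%:P * 'X
   + (m^-1 * (k * cos phi) - m^-1 * (alpha * sin phi * sin phi))%:P.
Proof.
rewrite /char_poly (expand_det_row _ ord0).
rewrite !big_ord_recr big_ord0 /= add0r.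
rewrite /cofactor.
rewrite !(expand_det_row _ ord0) !big_ord_recr big_ord0 /= !add0r /cofactor !det_mx11 !mxE /=.
rewrite !big_ord0 !add0r !(polyCN, polyCD, polyCM, polyC0, polyC1) /=. ring.
Qed.

Section Alg.
Variable R : realType.
Local Notation rc := (real_complex R).

Definition cub (a b c : R) : {poly R} := 'X^3 + a%:P * 'X^2 + b%:P * 'X + c%:P.
Definition quad (B C : R) : {poly R} := 'X^2 + B%:P * 'X + C%:P.

Lemma cub_factor a b c r : r^+3 + a * r^+2 + b * r + c = 0 ->
  cub a b c = ('X - r%:P) * quad (a + r) (b + r * (a + r)).
Proof.
move=> h; have -> : c = - r * (b + r * (a + r)).
  by apply/eqP; rewrite -subr_eq0 -h; apply/eqP; ring.
rewrite /cub /quad !(polyCN, polyCD, polyCM) /=; ring.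
Qed.

Lemma XsubC_pair (K : comNzRingType) (a b : K) :
  ('X - a%:P) * ('X - b%:P) = 'X^2 + (- (a + b))%:P * 'X + (a * b)%:P.
Proof. rewrite !(polyCN, polyCD, polyCM); ring. Qed.

Lemma quad_real B C : 0 <= B^+2 - 4 * C ->
  quad B C = ('X - ((- B + Num.sqrt (B^+2 - 4 * C)) / 2)%:P) *
             ('X - ((- B - Num.sqrt (B^+2 - 4 * C)) / 2)%:P).
Proof.
move=> hD; have hs := sqr_sqrtr hD.
set t := Num.sqrt _ in hs *.
rewrite XsubC_pair /quad; congr ('X^2 + _%:P * 'X + _%:P).
  by field.
have -> : ((- B + t) / 2) * ((- B - t) / 2) = (B^+2 - t^+2)/4 by field.
by by rewrite hs; field.
Qed.

Lemma map_quad B C : map_poly rc (quad B C) = 'X^2 + (rc B)%:P * 'X + (rc C)%:P.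
Proof.
by rewrite /quad !rmorphD !rmorphM /= !map_polyC map_polyX expr2.
Qed.

Lemma cpair r B C t : t^+2 = 4 * C - B^+2 ->
  map_poly rc (('X - r%:P) * quad B C) =
    ('X - (rc r)%:P) * ('X - ((- B / 2) +i* (t / 2))%C%:P) * ('X - (conjc ((- B / 2) +i* (t / 2))%C)%:P).
Proof.
move=> hs.
rewrite rmorphM /= map_polyXsubC map_quad -mulrA XsubC_pair.
have e1 : - ((- B / 2) +i* (t / 2) + conjc ((- B / 2) +i* (t / 2)))%C = rc B.
  apply/eqP; rewrite eq_complex /=; apply/andP; split; apply/eqP; by field.
have e2 : (((- B / 2) +i* (t / 2)) * conjc ((- B / 2) +i* (t / 2)))%C = rc C.
  apply/eqP; rewrite eq_complex /=; apply/andP; split; apply/eqP.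
    have -> : C = (B^+2 + t^+2)/4 by rewrite hs; field.
    by field.
  by field.
by rewrite e1 e2.
Qed.
End Alg.
Arguments cub {R}. Arguments quad {R}. Arguments quad_real {R}. Arguments cpair {R}. Arguments cub_factor {R}.

Definition Delta {R : realType} (a b c : R) :=
  a^+2 * b^+2 - 4 * b^+3 - 4 * a^+3 * c - 27 * c^+2 + 18 * a * b * c.

Lemma key_curves (R : realType) (m x y : R) : 0 < m -> x <= ubound m ->
  (y - curve1 m x) * (y - curve2 m x) =
  - (4 * m^+2 / 27) * Delta (1 + m^-1) (m^-1 + m^-1 * (x/2)) (m^-1 * (x/2) - m^-1 * (y/2)).
Proof.
move=> m0 hx.
have m0' : m != 0 by rewrite gt_eqF.
have hA : 0 <= 4 * (m + 1) ^+ 2 - 6 * m * (x + 2).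
  move: hx; rewrite /ubound ler_pdivlMr; last by lra.
  move=> h; nra.
rewrite /curve1 /curve2.
set S := Sroot m x.
have hS : S ^+ 2 = 4 * (m + 1) ^+ 2 - 6 * m * (x + 2) by rewrite /S /Sroot sqr_sqrtr.
have hx' : x = (4 * (m + 1) ^+ 2 - S^+2 - 12 * m) / (6 * m).
  rewrite hS; field; lra.
rewrite hx' /Delta. field. lra.
Qed.

Lemma between_iff (R : realType) (m x y : R) :
  between_curves m x y <-> (y - curve1 m x) * (y - curve2 m x) <= 0.
Proof.
rewrite /between_curves; split.
  by case=> /andP[h1 h2]; nra.
move=> h; case: (lerP (curve1 m x) (curve2 m x)) => hc.
  left; apply/andP; split; nra.
right; apply/andP; split; nra.
Qed.

Lemma G_iff (R : realType) (m x y r B C : R) : 0 < m ->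
  1 + m^-1 = B - r -> m^-1 + m^-1 * (x/2) = C - r * B ->
  m^-1 * (x/2) - m^-1 * (y/2) = - r * C ->
  ((x <= ubound m /\ between_curves m x y) <-> 0 <= B^+2 - 4 * C).
Proof.
move=> hm ha hb hc.
have hDel : Delta (1 + m^-1) (m^-1 + m^-1 * (x/2)) (m^-1 * (x/2) - m^-1 * (y/2))
   = (B^+2 - 4 * C) * (r^+2 + B * r + C)^+2.
  by rewrite ha hb hc /Delta; ring.
have hm2 : 0 < 4 * m^+2 / 27 by rewrite divr_gt0 // mulr_gt0 // exprn_gt0.
split.
  case=> hx hbt.
  have := @key_curves R m x y hm hx; rewrite hDel => hk.
  move/between_iff: hbt; rewrite hk => hle.
  case: (lerP 0 (B^+2 - 4 * C)) => // hD; exfalso.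
  have hQ : r^+2 + B * r + C != 0.
    apply/negP => /eqP hQ.
    have e : B^+2 - 4 * C = (2 * r + B)^+2 - 4 * (r^+2 + B * r + C) by ring.
    rewrite hQ mulr0 subr0 in e; move: hD; rewrite e => hD.
    have := sqr_ge0 (2 * r + B); lra.
  have hQ2 : 0 < (r^+2 + B * r + C)^+2 by rewrite exprn_even_gt0 // hQ.
  have : 0 < - (4 * m^+2 / 27) * ((B^+2 - 4 * C) * (r^+2 + B * r + C)^+2).
    rewrite mulNr -mulrN; apply: mulr_gt0 => //; rewrite -mulNr; apply: mulr_gt0 => //; lra.
  lra.
move=> hD.
have hq : 0 <= (B - r)^+2 - 3 * (C - r * B).
  have -> : (B - r)^+2 - 3 * (C - r * B) = (r + B/2)^+2 + 3/4 * (B^+2 - 4 * C) by field.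
  apply: addr_ge0; first exact: sqr_ge0.
  apply: mulr_ge0 => //; lra.
rewrite -ha -hb in hq.
have hx : x <= ubound m.
  rewrite /ubound ler_pdivlMr; last by rewrite mulr_gt0.
  have e : m^+2 * ((1 + m^-1)^+2 - 3 * (m^-1 + m^-1 * (x / 2))) = (m+1)^+2 - 3 * m - 3/2 * m * x.
    by field; rewrite gt_eqF.
  have : 0 <= m^+2 * ((1 + m^-1)^+2 - 3 * (m^-1 + m^-1 * (x / 2))) by apply: mulr_ge0 => //; apply: sqr_ge0.
  rewrite e; nra.
split => //.
apply/between_iff; rewrite (@key_curves R m x y hm hx) hDel.
rewrite mulNr oppr_le0; apply: mulr_ge0; first lra.
by apply: mulr_ge0 => //; apply: sqr_ge0.
Qed.

Lemma cub_horner (R : realType) (a b c t : R) : (cub a b c).[t] = t^+3 + a * t^+2 + b * t + c.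
Proof. by rewrite /cub !hornerE. Qed.

Lemma cmx_char (R : realType) (A : 'M[R]_3) :
  char_poly (cmx A) = map_poly (real_complex R) (char_poly A).
Proof. by rewrite /cmx map_char_poly. Qed.

Lemma map_three (R : realType) (r p q : R) :
  map_poly (real_complex R) (('X - r%:P) * (('X - p%:P) * ('X - q%:P))) =
  ('X - (real_complex R r)%:P) * ('X - (real_complex R p)%:P) * ('X - (real_complex R q)%:P).
Proof. by rewrite !rmorphM /= !map_polyXsubC mulrA. Qed.

Lemma core1 (R : realType) (m x y : R) (A : 'M[R]_3) : 0 < m -> 0 <= y -> y < x ->
  char_poly A = cub (1 + m^-1) (m^-1 + m^-1*(x/2)) (m^-1*(x/2) - m^-1*(y/2)) ->
  (~ (x <= ubound m /\ between_curves m x y) -> real_and_cpair_negre (@negR R) A) /\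
  ((x <= ubound m /\ between_curves m x y) -> three_real_eigs (@negR R) (@negR R) (@negR R) A).
Proof.
move=> hm hy hxy hA.
have him : 0 < m^-1 by rewrite invr_gt0.
set a := 1 + m^-1; set b := m^-1 + m^-1*(x/2); set c := m^-1*(x/2) - m^-1*(y/2).
have ha : 0 < a by rewrite /a; lra.
have hb : 0 < b by rewrite /b; nra.
have hc : 0 < c by rewrite /c; nra.
have hab : c < a * b by rewrite /a /b /c; nra.
set M := 1 + a + c.
have [r /andP[hr1 hr2] hroot] : exists2 r, - M <= r <= 0 & root (cub a b c) r.
  apply: poly_ivt; first by rewrite /M; lra.
  rewrite !cub_horner; apply/andP; split; last by rewrite expr0n /=; nra.
  have hM1 : 1 <= M by rewrite /M; lra.
  have hM2 : 1 <= M^+2 by nra.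
  rewrite !exprS expr0 !mulr1.
  have e : (- M) * ((- M) * (- M)) + a * ((- M) * (- M)) + b * (- M) + c
     = - (M * M) * (1 + c) - b * M + c by rewrite /M; ring.
  rewrite e; rewrite expr2 in hM2; nra.
move/rootP: hroot; rewrite cub_horner => hroot.
have hr : r < 0.
  rewrite lt_def hr2 andbT; apply/eqP => e; move: hroot; rewrite -e !expr0n /=; nra.
set B := a + r; set C := b + r * B.
have hfac : cub a b c = ('X - r%:P) * quad B C by apply: cub_factor.
have e1 : 1 + m^-1 = B - r by rewrite /B /a; ring.
have e2 : m^-1 + m^-1 * (x/2) = C - r * B by rewrite /C /b; ring.
have e3 : m^-1 * (x/2) - m^-1 * (y/2) = - r * C.
  rewrite /C /B -/c; apply/eqP; rewrite -subr_eq0 -hroot; apply/eqP; ring.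
have hG := @G_iff R m x y r B C hm e1 e2 e3.
have hneg : forall p, p^+3 + a * p^+2 + b * p + c = 0 -> p < 0.
  move=> p hp; rewrite ltNge; apply/negP => hp0.
  have : 0 <= p^+3 by apply: exprn_ge0.
  have : 0 <= a * p^+2 by apply: mulr_ge0 => //; [lra | apply: exprn_ge0].
  have : 0 <= b * p by apply: mulr_ge0 => //; lra.
  lra.
split.
  move=> hnG.
  have hD : B^+2 - 4 * C < 0 by rewrite ltNge; apply/negP => h; apply: hnG; apply/hG.
  set t := Num.sqrt (4 * C - B^+2).
  have ht : t^+2 = 4 * C - B^+2 by rewrite sqr_sqrtr; lra.
  have htp : 0 < t by rewrite sqrtr_gt0; lra.
  exists r, ((- B / 2) +i* (t / 2))%C; split; first by [].
  split. rewrite -complexIm /= eq_complex /= negb_and; apply/orP; left; apply/eqP; lra.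
  split.
    rewrite -complexRe ltcE /= eqxx /=.
    have hB : 0 < B.
      have hq : 0 < C - r * B + r^+2.
        have -> : C - r * B + r^+2 = (r - B/2)^+2 + (4 * C - B^+2)/4 by field.
        apply: ltr_pwDr; [lra | exact: sqr_ge0].
      have : a * b - c = B * (C - r * B + r^+2).
        rewrite /C /B -/c; apply/eqP; rewrite -subr_eq0.
        have -> : c = - (r^+3 + a * r^+2 + b * r) by apply/eqP; rewrite -subr_eq0 -hroot; apply/eqP; ring.
        apply/eqP; ring.
      move=> e; rewrite ltNge; apply/negP => hB0.
      have : B * (C - r * B + r^+2) <= 0 by apply: mulr_le0_ge0 => //; lra.
      lra.
    lra.
  by rewrite cmx_char hA hfac (cpair r B C t ht).
move=> hGh.
have hD : 0 <= B^+2 - 4 * C by apply/hG.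
exists r, ((- B + Num.sqrt (B^+2 - 4 * C)) / 2), ((- B - Num.sqrt (B^+2 - 4 * C)) / 2).
set t := Num.sqrt (B^+2 - 4 * C).
have ht : t^+2 = B^+2 - 4 * C by rewrite sqr_sqrtr.
have hquad : forall p, p^+2 + B * p + C = 0 -> p^+3 + a * p^+2 + b * p + c = 0.
  move=> p hp.
  have -> : p^+3 + a * p^+2 + b * p + c = (p - r) * (p^+2 + B * p + C) + (r^+3 + a * r^+2 + b * r + c).
    by rewrite /C /B; ring.
  by rewrite hp hroot mulr0 addr0.
split; first by [].
split.
  apply: hneg; apply: hquad.
  have -> : ((- B + t) / 2)^+2 + B * ((- B + t) / 2) + C = (t^+2 - B^+2 + 4 * C)/4 by field.
  by rewrite ht; field.
split.
  apply: hneg; apply: hquad.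
  have -> : ((- B - t) / 2)^+2 + B * ((- B - t) / 2) + C = (t^+2 - B^+2 + 4 * C)/4 by field.
  by rewrite ht; field.
by rewrite cmx_char hA hfac (quad_real B C hD) map_three.
Qed.

Lemma core2 (R : realType) (m x y : R) (A : 'M[R]_3) : 0 < m -> 0 <= x -> x < y ->
  char_poly A = cub (1 + m^-1) (m^-1 + m^-1*(x/2)) (m^-1*(x/2) - m^-1*(y/2)) ->
  (~ (x <= ubound m /\ between_curves m x y) -> real_and_cpair_negre (@posR R) A) /\
  ((x <= ubound m /\ between_curves m x y) -> three_real_eigs (@posR R) (@negR R) (@negR R) A).
Proof.
move=> hm hx hxy hA.
have him : 0 < m^-1 by rewrite invr_gt0.
set a := 1 + m^-1; set b := m^-1 + m^-1*(x/2); set c := m^-1*(x/2) - m^-1*(y/2).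
have ha : 0 < a by rewrite /a; lra.
have hb : 0 < b by rewrite /b; nra.
have hc : c < 0 by rewrite /c; nra.
set M := 1 - c.
have [r /andP[hr1 hr2] hroot] : exists2 r, 0 <= r <= M & root (cub a b c) r.
  apply: poly_ivt; first by rewrite /M; lra.
  rewrite !cub_horner; apply/andP; split; first by rewrite !expr0n /=; lra.
  have hM1 : 1 <= M by rewrite /M; lra.
  have hM3 : M <= M^+3.
    have hM2 : 1 <= M * M by nra.
    rewrite !exprS expr0 mulr1; nra.
  have : 0 <= a * M^+2 by apply: mulr_ge0; [lra | exact: sqr_ge0].
  have : 0 <= b * M by apply: mulr_ge0; lra.
  have hMc : M = 1 - c by []. lra.
move/rootP: hroot; rewrite cub_horner => hroot.
have hr : 0 < r.
  rewrite lt_def hr1 andbT; apply/eqP => e; move: hroot; rewrite e !expr0n /=; lra.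
set B := a + r; set C := b + r * B.
have hfac : cub a b c = ('X - r%:P) * quad B C by apply: cub_factor.
have e1 : 1 + m^-1 = B - r by rewrite /B /a; ring.
have e2 : m^-1 + m^-1 * (x/2) = C - r * B by rewrite /C /b; ring.
have e3 : m^-1 * (x/2) - m^-1 * (y/2) = - r * C.
  rewrite /C /B -/c; apply/eqP; rewrite -subr_eq0 -hroot; apply/eqP; ring.
have hG := @G_iff R m x y r B C hm e1 e2 e3.
have hB : 0 < B by rewrite /B; lra.
have hC : 0 < C.
  rewrite ltNge; apply/negP => hC0.
  have : 0 <= - r * C by rewrite mulNr oppr_ge0; apply: mulr_ge0_le0 => //; lra.
  rewrite -e3 -/c; lra.
split.
  move=> hnG.
  have hD : B^+2 - 4 * C < 0 by rewrite ltNge; apply/negP => h; apply: hnG; apply/hG.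
  set t := Num.sqrt (4 * C - B^+2).
  have ht : t^+2 = 4 * C - B^+2 by rewrite sqr_sqrtr; lra.
  have htp : 0 < t by rewrite sqrtr_gt0; lra.
  exists r, ((- B / 2) +i* (t / 2))%C; split; first by [].
  split. rewrite -complexIm /= eq_complex /= negb_and; apply/orP; left; apply/eqP; lra.
  split.
    rewrite -complexRe ltcE /= eqxx /=; lra.
  by rewrite cmx_char hA hfac (cpair r B C t ht).
move=> hGh.
have hD : 0 <= B^+2 - 4 * C by apply/hG.
exists r, ((- B + Num.sqrt (B^+2 - 4 * C)) / 2), ((- B - Num.sqrt (B^+2 - 4 * C)) / 2).
set t := Num.sqrt (B^+2 - 4 * C).
have ht : t^+2 = B^+2 - 4 * C by rewrite sqr_sqrtr.
have ht0 : 0 <= t by apply: sqrtr_ge0.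
have htB : t < B.
  rewrite ltNge; apply/negP => h.
  have : B^+2 <= t^+2 by rewrite !expr2; apply: ler_pM; lra.
  lra.
split; first by [].
split; first by rewrite /negR; lra.
split; first by rewrite /negR; lra.
by rewrite cmx_char hA hfac (quad_real B C hD) map_three.
Qed.

Lemma trig_facts (R : realType) (alpha omega : R) :
  0 < alpha -> 0 <= omega -> 2 * omega < alpha ->
  let theta := asin (2 * omega / alpha) / 2 in
  alpha * (cos theta * cos theta) = (alpha + Num.sqrt (alpha ^+ 2 - 4 * omega ^+ 2)) / 2 /\
  alpha * (sin theta * sin theta) = (alpha - Num.sqrt (alpha ^+ 2 - 4 * omega ^+ 2)) / 2.
Proof.
move=> ha hw hwa theta.
set X := 2 * omega / alpha.
have hX0 : 0 <= X by rewrite /X; apply: divr_ge0; lra.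
have hX1 : X < 1 by rewrite /X ltr_pdivrMr //; lra.
have hca : cos (asin X) = Num.sqrt (1 - X^+2) by apply: cos_asin; apply/andP; split; lra.
have h2 : asin X = theta *+ 2 by rewrite /theta mulr2n; by field.
have hs : alpha * Num.sqrt (1 - X^+2) = Num.sqrt (alpha ^+ 2 - 4 * omega ^+ 2).
  have -> : alpha ^+ 2 - 4 * omega ^+ 2 = alpha^+2 * (1 - X^+2).
    by rewrite /X; field; rewrite gt_eqF.
  by rewrite sqrtrM ?sqr_ge0 // sqrtr_sqr ger0_norm //; lra.
have hc2 : cos theta * cos theta = (1 + Num.sqrt (1 - X^+2)) / 2.
  by rewrite -hca h2 cos_mulr2n; rewrite expr2; field.
have hsc : sin theta * sin theta = 1 - cos theta * cos theta.
  by rewrite -!expr2 sin2cos2.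
split.
  by rewrite hc2 -hs; field.
by rewrite hsc hc2 -hs; field.
Qed.

Lemma charJ' (R : realType) (m alpha omega phi k x y : R) :
  k * cos phi = x / 2 -> alpha * sin phi * sin phi = y / 2 ->
  char_poly (jac m alpha omega phi 0 k) =
  cub (1 + m^-1) (m^-1 + m^-1*(x/2)) (m^-1*(x/2) - m^-1*(y/2)).
Proof. by move=> h1 h2; rewrite charJ h1 h2. Qed.

Theorem proposition1 (R : realType) (m alpha omega : R) :
  0 < m -> 0 < alpha -> 0 <= omega -> 2 * omega < alpha ->
  let theta := asin (2 * omega / alpha) / 2 in
  let u := alpha + Num.sqrt (alpha ^+ 2 - 4 * omega ^+ 2) in
  let v := alpha - Num.sqrt (alpha ^+ 2 - 4 * omega ^+ 2) in
  let J1 := jac m alpha omega theta 0 (alpha * cos theta) in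
  let J2 := jac m alpha omega (pi / 2 - theta) 0 (alpha * sin theta) in
  let J3 := jac m alpha omega (- pi + theta) 0 (- (alpha * cos theta)) in
  let J4 := jac m alpha omega (- (pi / 2) - theta) 0 (- (alpha * sin theta)) in
  ((~ Gamma1 m u v ->
      real_and_cpair_negre (@negR R) J1 /\ real_and_cpair_negre (@negR R) J3) /\
   (Gamma1 m u v ->
      three_real_eigs (@negR R) (@negR R) (@negR R) J1 /\
      three_real_eigs (@negR R) (@negR R) (@negR R) J3)) /\
  ((~ Gamma2 m u v ->
      real_and_cpair_negre (@posR R) J2 /\ real_and_cpair_negre (@posR R) J4) /\
   (Gamma2 m u v ->
      three_real_eigs (@posR R) (@negR R) (@negR R) J2 /\
      three_real_eigs (@posR R) (@negR R) (@negR R) J4)).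
Proof.
move=> hm ha hw hwa theta u v J1 J2 J3 J4.
have [hc hs] := @trig_facts R alpha omega ha hw hwa.
rewrite -/theta in hc hs.
set s := Num.sqrt (alpha ^+ 2 - 4 * omega ^+ 2) in hc hs *.
have hs0 : 0 < s.
  rewrite /s sqrtr_gt0; have : 0 <= 2 * omega by lra.
  move=> h; have : (2 * omega) * (2 * omega) < alpha * alpha by apply: ltr_pM.
  lra.
have hsa : s <= alpha.
  have h1 : alpha ^+ 2 - 4 * omega ^+ 2 <= alpha ^+ 2 by have := sqr_ge0 omega; lra.
  by rewrite /s; apply: (le_trans (ler_wsqrtr h1)); rewrite sqrtr_sqr ger0_norm // ltW.
have hv0 : 0 <= v by rewrite /v -/s; lra.
have hvu : v < u by rewrite /u /v -/s; lra.
have hu2 : alpha * (cos theta * cos theta) = u / 2 by rewrite hc /u -/s.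
have hv2 : alpha * (sin theta * sin theta) = v / 2 by rewrite hs /v -/s.
have cJ1 : char_poly J1 = cub (1 + m^-1) (m^-1 + m^-1*(u/2)) (m^-1*(u/2) - m^-1*(v/2)).
  by apply: charJ'; rewrite -?hu2 -?hv2; ring.
have cJ3 : char_poly J3 = cub (1 + m^-1) (m^-1 + m^-1*(u/2)) (m^-1*(u/2) - m^-1*(v/2)).
  apply: charJ'; rewrite -?hu2 -?hv2 ?cosD ?sinD ?cosN ?sinN ?cospi ?sinpi; ring.
have cJ2 : char_poly J2 = cub (1 + m^-1) (m^-1 + m^-1*(v/2)) (m^-1*(v/2) - m^-1*(u/2)).
  apply: charJ'; rewrite -?hu2 -?hv2 ?cosB ?sinB ?cos_pihalf ?sin_pihalf; ring.
have cJ4 : char_poly J4 = cub (1 + m^-1) (m^-1 + m^-1*(v/2)) (m^-1*(v/2) - m^-1*(u/2)).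
  apply: charJ'; rewrite -?hu2 -?hv2 ?cosB ?sinB ?cosN ?sinN ?cos_pihalf ?sin_pihalf; ring.
have G1 : Gamma1 m u v <-> (u <= ubound m /\ between_curves m u v).
  rewrite /Gamma1; split; first by case=> _ [_ [h1 h2]].
  by case=> h1 h2; split => //; split => //; exact: ltW.
have G2 : Gamma2 m u v <-> (v <= ubound m /\ between_curves m v u).
  rewrite /Gamma2; split; first by case=> _ [_ [h1 h2]].
  by case=> h1 h2; split => //; split => //; exact: ltW.
have hu0 : 0 <= v by [].
have [a1 b1] := @core1 R m u v J1 hm hv0 hvu cJ1.
have [a3 b3] := @core1 R m u v J3 hm hv0 hvu cJ3.
have [a2 b2] := @core2 R m v u J2 hm hv0 hvu cJ2.
have [a4 b4] := @core2 R m v u J4 hm hv0 hvu cJ4.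
split; split.
- by move=> h; split; [apply: a1 | apply: a3]; move=> h'; apply: h; apply/G1.
- by move=> /G1 h; split; [apply: b1 | apply: b3].
- by move=> h; split; [apply: a2 | apply: a4]; move=> h'; apply: h; apply/G2.
- by move=> /G2 h; split; [apply: b2 | apply: b4].
Qed.
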